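(* Let $h:B_4\to B_3$ be the homomorphism with $h(\sigma_1)=\sigma_1$, $h(\sigma_2)=\sigma_2$, $h(\sigma_3)=\sigma_1$. Then $\ker h$ is densely ordered by the restriction of the Dehornoy ordering of $B_4$.
   Context: $B_n$ is the Artin braid group with generators $\sigma_1,\dots,\sigma_{n-1}$. A word in the generators is $i$-positive if it contains only $\sigma_1,\dots,\sigma_i$ and their inverses, $\sigma_i$ occurs, and every occurrence of $\sigma_i$ has positive exponent; a braid is $i$-positive if some representative word is. The Dehornoy ordering is the left-invariant total order on $B_n$ whose positive cone consists of all braids that are $i$-positive for some $i$. A subgroup is densely ordered if it has no least positive element (equivalently, between any two of its elements lies a third). *)

(* Defs.v *)
From mathcomp Require Import all_boot.
Set Implicit Arguments. Unset Strict Implicit. Unset Printing Implicit Defensive.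

(* A letter (i, true) is sigma_i, (i, false) is sigma_i^{-1}; indices start at 1. *)
Definition letter := (nat * bool)%type.
Definition bword := seq letter.

Definition valid_word (n : nat) (w : bword) : bool :=
  all (fun l : letter => (0 < l.1) && (l.1 < n)) w.

Inductive braid_rel (n : nat) : bword -> bword -> Prop :=
| br_cancel i b : 0 < i -> i < n -> braid_rel n [:: (i, b); (i, ~~ b)] [::]
| br_far i j : 0 < i -> i < n -> 0 < j -> j < n -> (i.+1 < j) || (j.+1 < i) ->
    braid_rel n [:: (i, true); (j, true)] [:: (j, true); (i, true)]
| br_near i j : 0 < i -> i < n -> 0 < j -> j < n -> (j == i.+1) || (i == j.+1) ->
    braid_rel n [:: (i, true); (j, true); (i, true)] [:: (j, true); (i, true); (j, true)].

Inductive braid_eq (n : nat) : bword -> bword -> Prop :=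
| be_refl w : braid_eq n w w
| be_sym u v : braid_eq n u v -> braid_eq n v u
| be_trans u v w : braid_eq n u v -> braid_eq n v w -> braid_eq n u w
| be_ctx u x y v : valid_word n u -> valid_word n v -> braid_rel n x y ->
    braid_eq n (u ++ x ++ v) (u ++ y ++ v).

Definition winv (w : bword) : bword := rev (map (fun l : letter => (l.1, ~~ l.2)) w).

Definition i_positive (i : nat) (w : bword) : bool :=
  all (fun l : letter => l.1 <= i) w &&
  has (fun l : letter => l.1 == i) w &&
  all (fun l : letter => (l.1 == i) ==> l.2) w.

Definition dehornoy_pos (n : nat) (w : bword) : Prop :=
  exists (w' : bword) (i : nat), valid_word n w' /\ braid_eq n w w' /\ 0 < i /\ i_positive i w'.

Definition dehornoy_lt (n : nat) (x y : bword) : Prop := dehornoy_pos n (winv x ++ y).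

(* a subgroup H of B_n (given as a predicate on words) is densely ordered:
   it has no least positive element *)
Definition densely_ordered (n : nat) (H : bword -> Prop) : Prop :=
  ~ exists p : bword, [/\ valid_word n p, H p, dehornoy_pos n p &
      forall q : bword, valid_word n q -> H q -> dehornoy_pos n q ->
        braid_eq n p q \/ dehornoy_lt n p q].

Definition h_letter (l : letter) : letter := if l.1 == 3 then (1, l.2) else l.
Definition h_word (w : bword) : bword := map h_letter w.

Definition ker_h (w : bword) : Prop := braid_eq 3 (h_word w) [::].

(* Main.v *)
Require Import Defs.
From mathcomp Require Import all_boot.
Set Implicit Arguments. Unset Strict Implicit. Unset Printing Implicit Defensive.

Definition linv (l : letter) : letter := (l.1, ~~ l.2).
Definition push (s : bword) (l : letter) : bword :=
  if s is t :: s' then (if t == linv l then s' else l :: s) else [:: l].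
Definition rred (w : bword) := foldl push [::] w.
Definition subst (f : letter -> bword) (w : bword) := flatten (map f w).
Definition redS (s : bword) := sorted (fun a b => a != linv b) s.

Lemma linvvK l : linv (linv l) = l.
Proof. by case: l => a b; rewrite /linv /= negbK. Qed.

Lemma linv_eqE a b : (a == linv b) = (linv a == b).
Proof. by apply/eqP/eqP => [->|<-]; rewrite linvvK. Qed.

Lemma neq_inv_sym a b : (a != linv b) = (b != linv a).
Proof. by rewrite linv_eqE eq_sym. Qed.

Lemma redS_push s l : redS s -> redS (push s l).
Proof.
case: s => [|t s] //= H.
case: ifP => E.
  by case: s H => //= u s /andP [].
by rewrite /= H andbT neq_inv_sym E.
Qed.

Lemma redS_fold s m : redS s -> redS (foldl push s m).
Proof. by elim: m s => //= l m IH s H; apply: IH; apply: redS_push. Qed.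

Lemma push_inv s l : redS s -> push (push s l) (linv l) = s.
Proof.
case: s => [|t s] H; first by rewrite /= linvvK eqxx.
rewrite /=; have [Et|Nt] := eqVneq t (linv l).
  subst t. case: s H => [|u s] //= /andP [H1 _].
  rewrite linvvK; case: eqVneq => // Eu; subst u. by rewrite eqxx in H1.
by rewrite /= linvvK eqxx.
Qed.

Lemma winv_rcons m l : winv (rcons m l) = linv l :: winv m.
Proof. by rewrite /winv map_rcons rev_rcons. Qed.

Lemma winv_cons m l : winv (l :: m) = rcons (winv m) (linv l).
Proof. by rewrite /winv /= rev_cons. Qed.

Lemma winvK m : winv (winv m) = m.
Proof.
rewrite /winv map_rev revK -map_comp.
by rewrite -[RHS]map_id; apply: eq_map => l; rewrite /= negbK; case: l.
Qed.

Lemma winv_cat a b : winv (a ++ b) = winv b ++ winv a.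
Proof. by rewrite /winv map_cat rev_cat. Qed.

Lemma fold_cancel s m v : redS s -> foldl push s (m ++ winv m ++ v) = foldl push s v.
Proof.
elim/last_ind: m s v => [|m l IH] s v H //=.
rewrite winv_rcons -cats1 -!catA /= foldl_cat /= push_inv; last exact: redS_fold.
by rewrite -foldl_cat IH.
Qed.

Lemma fold_cancel' s m v : redS s -> foldl push s (winv m ++ m ++ v) = foldl push s v.
Proof. by move=> H; rewrite -{2}(winvK m) fold_cancel. Qed.

Lemma redS_rred u : redS (rred u).
Proof. exact: redS_fold. Qed.

Lemma fold_rred s u : redS s -> foldl push s u = foldl push s (rev (rred u)).
Proof.
move=> Hs; elim/last_ind: u => [|u l IH] //.
rewrite /rred -cats1 !foldl_cat /= -/(rred u) IH.
have := redS_rred u.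
case: (rred u) => [|t r] //= Hr.
have [Et|Nt] := eqVneq t (linv l).
  subst t. rewrite rev_cons -cats1 foldl_cat /=.
  by have := push_inv (linv l) (redS_fold (rev r) Hs); rewrite linvvK.
by rewrite [rev (l :: _)]rev_cons -cats1 foldl_cat.
Qed.

Definition goodf (f : letter -> bword) := forall g, f (linv g) = winv (f g).

Lemma subst_cat f a b : subst f (a ++ b) = subst f a ++ subst f b.
Proof. by rewrite /subst map_cat flatten_cat. Qed.

Lemma subst_rcons f a l : subst f (rcons a l) = subst f a ++ f l.
Proof. by rewrite -cats1 subst_cat /subst /= cats0. Qed.

Lemma rred_cat a b : rred (a ++ b) = foldl push (rred a) b.
Proof. by rewrite /rred foldl_cat. Qed.

Lemma red_subst f u : goodf f -> rred (subst f u) = rred (subst f (rev (rred u))).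
Proof.
move=> Hf; elim/last_ind: u => [|u l IH] //.
rewrite subst_rcons rred_cat IH -rred_cat.
rewrite -cats1 [rred (u ++ _)]rred_cat /=.
have := redS_rred u.
case: (rred u) => [|t r] Hr; first by rewrite /subst /= cats0. rewrite /=.
have [Et|Nt] := eqVneq t (linv l).
  subst t.
  rewrite rev_cons subst_rcons Hf -catA rred_cat.
  by have := fold_cancel' (f l) [::] (redS_rred (subst f (rev r))); rewrite cats0.
by rewrite (rev_cons l (t :: r)) subst_rcons.
Qed.

Lemma red_subst_ext f f' u : (forall g, rred (f g) = rred (f' g)) ->
  rred (subst f u) = rred (subst f' u).
Proof.
move=> H; elim/last_ind: u => [|u l IH] //.
rewrite !subst_rcons !rred_cat IH.
by rewrite (fold_rred _ (redS_rred _)) H -fold_rred //; exact: redS_rred.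
Qed.

Lemma red_subst_eq f a b : goodf f -> rred a = rred b -> rred (subst f a) = rred (subst f b).
Proof. by move=> Hf E; rewrite red_subst // E -red_subst. Qed.

Definition psi (a c : nat) (g : letter) : bword :=
  if g.1 == a then [:: (c, g.2)] else if g.1 == c then [:: (c,true); (a,g.2); (c,false)] else [:: g].
Definition phi (l : letter) : letter -> bword :=
  if l.2 then psi l.1 l.1.+1 else (fun g => map linv (psi l.1.+1 l.1 (linv g))).
Definition act (b : bword) (m : bword) := foldl (fun m l => subst (phi l) m) m b.

Lemma winv_map_inv x : winv (map linv x) = map linv (winv x).
Proof. by rewrite /winv map_rev. Qed.

Lemma psi_good a c : goodf (psi a c).
Proof.
move=> [k e]; rewrite /psi /linv /=.
case: eqP => _; first by [].
by case: eqP => _.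
Qed.

Lemma phi_good l : goodf (phi l).
Proof.
rewrite /phi; case: l.2; first exact: psi_good.
move=> g; by rewrite linvvK psi_good winv_map_inv winvK.
Qed.

Lemma act_cat_m b m1 m2 : act b (m1 ++ m2) = act b m1 ++ act b m2.
Proof. by elim: b m1 m2 => //= l b IH m1 m2; rewrite subst_cat IH. Qed.

Lemma act_subst b m : act b m = subst (fun g => act b [:: g]) m.
Proof.
elim: m => [|g m IH]; first by elim: b.
by rewrite -cat1s act_cat_m IH.
Qed.

Lemma act_red b m1 m2 : rred m1 = rred m2 -> rred (act b m1) = rred (act b m2).
Proof.
elim: b m1 m2 => //= l b IH m1 m2 E; apply: IH; apply: red_subst_eq => //; exact: phi_good.
Qed.

Lemma rel_letter x y : braid_rel 4 x y -> forall g, rred (act x [:: g]) = rred (act y [:: g]).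
Proof.
case => [i b|i j|i j].
- move=> Hi Hi4 [k e].
  case: i Hi Hi4 => [|[|[|[|i]]]] // _ _; case: b; case: e;
  (do 5 (case: k => [|k]; first by vm_compute)); by vm_compute.
- move=> Hi Hi4 Hj Hj4 Hij [k e].
  case: i Hi Hi4 Hij => [|[|[|[|i]]]] // _ _; case: j Hj Hj4 => [|[|[|[|j]]]] // _ _ _; case: e;
  (do 5 (case: k => [|k]; first by vm_compute)); by vm_compute.
- move=> Hi Hi4 Hj Hj4 Hij [k e].
  case: i Hi Hi4 Hij => [|[|[|[|i]]]] // _ _; case: j Hj Hj4 => [|[|[|[|j]]]] // _ _ _; case: e;
  (do 5 (case: k => [|k]; first by vm_compute)); by vm_compute.
Qed.

Lemma braid_act u v : braid_eq 4 u v -> forall m, rred (act u m) = rred (act v m).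
Proof.
elim.
- by [].
- by move=> u' v' _ IH m; rewrite IH.
- by move=> u' v' w _ IH1 _ IH2 m; rewrite IH1 IH2.
move=> u' x y v' _ _ Hr m.
rewrite /act !foldl_cat -/(act v' _) -!/(act _ _); apply: act_red.
rewrite (act_subst x) (act_subst y); apply: red_subst_ext; exact: rel_letter.
Qed.

Definition Inv (a c : nat) (o : option letter) (s : bword) : Prop :=
  match o with
  | None => s = [::]
  | Some L =>
    if L.1 == c then exists r, s = (c,false) :: (a, L.2) :: r
    else if L.1 == a then
      (if L.2 then exists t r, s = t :: r /\ ((t == (c,true)) || (t.1 == a))
       else exists r, s = (c,false) :: r /\ (forall t r', r = t :: r' -> (t.1 != a) && (t != (c,true))))
    else exists r, s = L :: r
  end.

Lemma push_nil l : push [::] l = [:: l].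
Proof. by []. Qed.

Lemma push_ne t r l : t != linv l -> push (t :: r) l = l :: t :: r.
Proof. by move=> H; rewrite /= (negbTE H). Qed.

Lemma push_eq r l : push (linv l :: r) l = r.
Proof. by rewrite /= eqxx. Qed.

Lemma pair_neq1 (x y : nat) (b b' : bool) : x != y -> (x, b) != (y, b').
Proof. by move=> H; apply/eqP; case=> E; rewrite E eqxx in H. Qed.

Lemma pair_neq2 (x y : nat) (b b' : bool) : b != b' -> (x, b) != (y, b').
Proof. by move=> H; apply/eqP; case=> _ E; rewrite E eqxx in H. Qed.

Lemma trans a c o l s : a != c -> Inv a c o s -> (forall t, o = Some t -> l != linv t) ->
  Inv a c (Some l) (foldl push s (psi a c l)).
Proof.
move=> ac HI Hl; have ca : c != a by rewrite eq_sym.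
case: l Hl => k e Hl.
rewrite /psi /=.
have [Eka|ka] := eqVneq k a.
  subst k. rewrite (negbTE ac).
  case: o HI Hl => [[k' e']|] /= HI Hl; last first.
    subst s; case: e Hl => Hl; first by exists (c,true), [::]; rewrite eqxx.
    by exists [::]; split=> // t r'.
  have {}Hl := Hl _ erefl.
  have [Ek|k'c] := eqVneq k' c.
    subst k'. rewrite eqxx in HI. case: HI => r ->.
    case: e Hl => Hl.
      by rewrite /= /linv /= eqxx; exists (a,e'), r; rewrite eqxx orbT.
    rewrite push_ne; last by rewrite /linv /=; apply: pair_neq2.
    exists [:: (c,false), (a,e') & r]; split=> // t r' [<- _].
    by rewrite /= ca; apply: pair_neq2.
  rewrite (negbTE k'c) in HI.
  have [Ek|k'a] := eqVneq k' a.
    subst k'. rewrite eqxx in HI.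
    case: e' HI Hl => HI Hl; case: e Hl => Hl; try by rewrite /linv eqxx in Hl.
      case: HI => t [r [-> Ht]].
      rewrite /=; case: eqP => [Et|_]; last by exists (c,true), (t :: r); rewrite eqxx.
      by move: Ht; rewrite Et /linv /= xpair_eqE eqxx /= (negbTE ca).
    case: HI => r [-> Hr]; rewrite push_ne; last by rewrite /linv /=; apply: pair_neq2.
    by exists [:: (c,false) & r]; split=> // t r' [<- _]; rewrite /= ca; apply: pair_neq2.
  rewrite (negbTE k'a) in HI. case: HI => r ->.
  case: e Hl => Hl.
    exists (c,true), [:: (k',e') & r]; rewrite push_ne ?eqxx //; rewrite /linv /=; exact: pair_neq1.
  exists [:: (k',e') & r]; rewrite push_ne; last by rewrite /linv; apply: pair_neq1.
  split=> // t r' [<- _]; rewrite /= k'a /=; exact: pair_neq1.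
have [Ekc|kc] := eqVneq k c.
  subst k.
  have E3 : forall x y z, foldl push s [:: x; y; z] = push (push (push s x) y) z by [].
  suff H : forall t r, push s (c,true) = t :: r -> t != (a, ~~ e).
    rewrite E3; case E1: (push s (c,true)) => [|t r].
      by exists [::]; rewrite /= /linv /= (negbTE (pair_neq1 _ _ ac)).
    exists (t :: r); rewrite push_ne; last exact: (H _ _ E1).
    by rewrite push_ne //; rewrite /linv /=; apply: pair_neq1.
  case: o HI Hl => [[k' e']|] /= HI Hl; last by subst s; move=> t r [<- _]; apply: pair_neq1.
  have {}Hl := Hl _ erefl.
  have [Ek|k'c] := eqVneq k' c.
    subst k'. rewrite eqxx in HI. case: HI => r ->.
    rewrite /= /linv /= eqxx => t r' [<- _].
    apply: pair_neq2; case: e Hl; case: e' => Hl //; by rewrite /linv eqxx in Hl.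
  rewrite (negbTE k'c) in HI.
  have [Ek|k'a] := eqVneq k' a.
    subst k'. rewrite eqxx in HI.
    case: e' HI Hl => HI Hl.
      case: HI => t [r [-> Ht]].
      rewrite push_ne => [t' r' [<- _]|]; first by apply: pair_neq1.
      case/orP: Ht => [/eqP ->|/eqP Ht]; first by rewrite /linv /=; apply: pair_neq2.
      by rewrite /linv /=; apply: pair_neq1; rewrite Ht.
    case: HI => r [-> Hr]; rewrite /= /linv /= eqxx => t r' Er; subst r.
    by have /andP [H1 _] := Hr _ _ erefl; apply: pair_neq1.
  rewrite (negbTE k'a) in HI. case: HI => r ->.
  rewrite push_ne => [t' r' [<- _]|]; first by apply: pair_neq1.
  by rewrite /linv /=; apply: pair_neq1.
rewrite /=; case: o HI Hl => [[k' e']|] /= HI Hl; last by subst s; exists [::].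
have {}Hl := Hl _ erefl.
suff H : forall t r, s = t :: r -> t != (k, ~~ e).
  case: s H {HI} => [|t r] H; first by exists [::].
  by exists (t :: r); rewrite push_ne // /linv; exact: H.
have [Ek|k'c] := eqVneq k' c.
  subst k'. rewrite eqxx in HI. case: HI => r -> t r' [<- _]. 
  by apply: pair_neq1; rewrite eq_sym.
rewrite (negbTE k'c) in HI.
have [Ek|k'a] := eqVneq k' a.
  subst k'. rewrite eqxx in HI.
  case: e' HI Hl => HI Hl.
    case: HI => t [r [-> Ht]] t' r' [<- _].
    case/orP: Ht => [/eqP ->|/eqP Ht]; first by apply: pair_neq1; rewrite eq_sym.
    by apply: pair_neq1; rewrite Ht eq_sym.
  case: HI => r [-> Hr] t r' [<- _].
  by apply: pair_neq1; rewrite eq_sym.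
rewrite (negbTE k'a) in HI. case: HI => r -> t r' [<- _].
apply/eqP => E; move: Hl; rewrite E /linv /= negbK eqxx; done.
Qed.

Lemma machine a c T : a != c -> redS T -> Inv a c (ohead T) (rred (subst (psi a c) (rev T))).
Proof.
move=> ac; elim: T => [|l T IH] H //=.
have HT : redS T by case: T H {IH} => //= t T /andP [].
rewrite rev_cons subst_rcons rred_cat; apply: trans => //; first exact: IH.
by case: T H {IH HT} => //= t T /andP [H _] t' [<-].
Qed.

Lemma z_top a c t T : a != c -> redS (t :: T) -> t.1 != a -> t.1 != c ->
  ohead (rred (subst (psi a c) (rev (t :: T)))) = Some t.
Proof.
move=> ac H ta tc; have := machine ac H; rewrite /Inv /= (negbTE ta) (negbTE tc).
by case=> r ->.
Qed.

Lemma y_top a c T : a != c -> redS ((c,false) :: T) ->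
  ohead (rred (subst (psi a c) (rev ((c,false) :: T)))) = Some (c,false).
Proof.
move=> ac H; have := machine ac H; rewrite /Inv /= eqxx.
by case=> r ->.
Qed.

Lemma subst_conj f w : subst (fun g => map linv (f (linv g))) w = map linv (subst f (map linv w)).
Proof. by elim: w => //= g w IH; rewrite /subst /= map_cat -!/(subst _ _) IH. Qed.

Lemma push_linv s l : map linv (push s l) = push (map linv s) (linv l).
Proof.
case: s => [|t s] //=.
have -> : (linv t == linv (linv l)) = (t == linv l).
  by rewrite linvvK [RHS]linv_eqE.
by case: ifP.
Qed.

Lemma rred_linv u : rred (map linv u) = map linv (rred u).
Proof.
elim/last_ind: u => [|u l IH] //.
by rewrite map_rcons -!cats1 !rred_cat IH /= push_linv.
Qed.

Lemma redS_linv T : redS T -> redS (map linv T).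
Proof.
case: T => //= t T; elim: T t => //= u T IH t /andP [H1 H2].
apply/andP; split; last exact: IH.
by rewrite linvvK -linv_eqE.
Qed.

Lemma step_low i k e T : k < i -> redS ((i.+1,false) :: T) ->
  ohead (rred (subst (phi (k,e)) (rev ((i.+1,false) :: T)))) = Some (i.+1,false).
Proof.
move=> ki H.
have n1 : i.+1 != k by rewrite gtn_eqF // ltnS ltnW.
have n2 : i.+1 != k.+1 by rewrite gtn_eqF.
case: e; rewrite /phi /=.
  apply: z_top => //; by rewrite neq_ltn ltnSn.
rewrite subst_conj rred_linv map_rev /= {1}/linv /=.
have Z : ohead (rred (subst (psi k.+1 k) (rev ((i.+1,true) :: map linv T)))) = Some (i.+1,true).
  apply: z_top => //.
  - by rewrite eq_sym neq_ltn ltnSn.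
  - by have := redS_linv H.
by case: (rred _) Z => [|t r] //= [->].
Qed.

Lemma act_rcons w l m : act (rcons w l) m = subst (phi l) (act w m).
Proof. by rewrite /act foldl_rcons. Qed.

Lemma larue i w : 0 < i -> all (fun l : letter => l.1 <= i) w ->
  all (fun l : letter => (l.1 == i) ==> l.2) w ->
  (has (fun l : letter => l.1 == i) w -> ohead (rred (act w [:: (i.+1,true)])) = Some (i.+1,false)) /\
  (~~ has (fun l : letter => l.1 == i) w -> rred (act w [:: (i.+1,true)]) = [:: (i.+1,true)]).
Proof.
move=> i0; elim/last_ind: w => [|w [k e] IH] //.
rewrite !all_rcons has_rcons => /andP [ki Hw1] /andP [Hki Hw2].
have [IH1 IH2] := IH Hw1 Hw2.
rewrite act_rcons red_subst; last exact: phi_good.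
have [Eki|nki] := eqVneq k i.
  subst k; rewrite eqxx /= in Hki; case: e Hki ki => // _ _; rewrite /=; split=> // _.
  case: (boolP (has (fun l : letter => l.1 == i) w)) => Hh.
    have := IH1 Hh; have := redS_rred (act w [:: (i.+1, true)]).
    case: (rred _) => [|t r] //= Hr [Et]; subst t.
    by rewrite /phi /=; apply: y_top => //; rewrite neq_ltn ltnSn.
  rewrite IH2 //= /phi /psi /subst /= (gtn_eqF (ltnSn i)) eqxx /rred /= /linv /= !xpair_eqE (gtn_eqF (ltnSn i)) ?(ltn_eqF (ltnSn i)) /=.
  by rewrite /linv /= xpair_eqE (ltn_eqF (ltnSn i)).
have kli : k < i by rewrite ltn_neqAle nki.
rewrite /=; split=> Hh.
  have := IH1 Hh; have := redS_rred (act w [:: (i.+1, true)]).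
  case: (rred _) => [|t r] //= Hr [Et]; subst t.
  exact: step_low.
rewrite IH2 //.
have n1 : (i.+1 == k) = false by rewrite gtn_eqF // ltnS ltnW.
have n2 : (i.+1 == k.+1) = false by rewrite gtn_eqF.
by case: e {Hki ki}; rewrite /phi /psi /subst /= ?n1 ?n2.
Qed.

Lemma propA i w : 0 < i -> valid_word 4 w -> i_positive i w -> ~ braid_eq 4 w [::].
Proof.
move=> i0 _ /andP [/andP [H1 H2] H3] E.
have [L _] := larue i0 H1 H3.
have := L H2; rewrite (braid_act E) /=.
by rewrite /rred /= => -[].
Qed.

Lemma valid_cat n u v : valid_word n (u ++ v) = valid_word n u && valid_word n v.
Proof. exact: all_cat. Qed.

Lemma valid_winv n u : valid_word n (winv u) = valid_word n u.
Proof. by rewrite /valid_word /winv all_rev all_map. Qed.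

Lemma cong n x y u v : braid_eq n x y -> valid_word n u -> valid_word n v ->
  braid_eq n (u ++ x ++ v) (u ++ y ++ v).
Proof.
move=> H Hu Hv; elim: H.
- by move=> w; apply: be_refl.
- by move=> a b _ IH; apply: be_sym.
- by move=> a b c _ IH1 _ IH2; apply: be_trans IH2.
move=> u' x' y' v' Hu' Hv' Hr.
have E : forall z, u ++ (u' ++ z ++ v') ++ v = (u ++ u') ++ z ++ (v' ++ v).
  by move=> z; rewrite !catA.
rewrite !E; apply: be_ctx => //; rewrite valid_cat ?Hu ?Hu' ?Hv ?Hv' //.
Qed.

Lemma congL n x y v : braid_eq n x y -> valid_word n v -> braid_eq n (x ++ v) (y ++ v).
Proof. by move=> H Hv; have := cong H (isT : valid_word n [::]) Hv. Qed.

Lemma congR n x y u : braid_eq n x y -> valid_word n u -> braid_eq n (u ++ x) (u ++ y).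
Proof. by move=> H Hu; have := cong H Hu (isT : valid_word n [::]); rewrite !cats0. Qed.

Lemma rel1 n x y : braid_rel n x y -> braid_eq n x y.
Proof. by move=> H; have := be_ctx (isT : valid_word n [::]) (isT : valid_word n [::]) H; rewrite /= !cats0. Qed.

Lemma cancel_r n u : valid_word n u -> braid_eq n (u ++ winv u) [::].
Proof.
elim: u => [|[i b] u IH] /=; first by move=> _; apply: be_refl.
case/andP => /andP [i0 i1] Hu.
rewrite winv_cons -cats1.
apply: be_trans (_ : braid_eq n ([:: (i,b)] ++ [::] ++ [:: (i, ~~ b)]) _).
  have := cong (IH Hu) (_ : valid_word n [:: (i,b)]) (_ : valid_word n [:: (i,~~b)]).
  by rewrite /= i0 i1 /= !catA; apply.
by apply: rel1; apply: br_cancel.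
Qed.

Lemma cancel_l n u : valid_word n u -> braid_eq n (winv u ++ u) [::].
Proof. by move=> H; have := @cancel_r n (winv u); rewrite winvK valid_winv; apply. Qed.

Lemma h_cat u v : h_word (u ++ v) = h_word u ++ h_word v.
Proof. exact: map_cat. Qed.

Lemma h_valid u : valid_word 4 u -> valid_word 3 (h_word u).
Proof.
rewrite /valid_word /h_word all_map; apply: sub_all => [[k e]] /andP [k0 k4].
rewrite /h_letter /=; case: eqP => [_|/eqP k3] //=.
by rewrite k0 /= ltn_neqAle k3 -ltnS.
Qed.

Lemma h_rel x y : braid_rel 4 x y -> braid_eq 3 (h_word x) (h_word y).
Proof.
case => [i b|i j|i j].
- move=> i0 i4; apply: rel1; rewrite /h_word /h_letter /=.
  by case: ifP => Hi3; apply: br_cancel => //; move: i0 i4 Hi3; case: i => [|[|[|[|i]]]].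
- move=> i0 i4 j0 j4 Hij.
  case: i i0 i4 Hij => [|[|[|[|i]]]] // _ _; case: j j0 j4 => [|[|[|[|j]]]] // _ _ _;
  exact: be_refl.
- move=> i0 i4 j0 j4 Hij.
  case: i i0 i4 Hij => [|[|[|[|i]]]] // _ _; case: j j0 j4 => [|[|[|[|j]]]] // _ _ _;
  rewrite /h_word /h_letter /=; apply: rel1; by apply: br_near.
Qed.

Lemma h_eq u v : braid_eq 4 u v -> braid_eq 3 (h_word u) (h_word v).
Proof.
elim.
- by move=> w; apply: be_refl.
- by move=> a b _ IH; apply: be_sym.
- by move=> a b c _ IH1 _ IH2; apply: be_trans IH2.
move=> u' x y v' Hu Hv Hr; rewrite !h_cat.
by apply: cong; [exact: h_rel | exact: h_valid | exact: h_valid].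
Qed.

Lemma valid34 u : valid_word 3 u -> valid_word 4 u.
Proof. by apply: sub_all => l /andP [-> /= H]; apply: ltnW. Qed.

Lemma rel34 x y : braid_rel 3 x y -> braid_rel 4 x y.
Proof.
case => [i b i0 i3|i j i0 i3 j0 j3 H|i j i0 i3 j0 j3 H].
- by apply: br_cancel => //; apply: ltnW.
- by apply: br_far => //; apply: ltnW.
- by apply: br_near => //; apply: ltnW.
Qed.

Lemma mono u v : braid_eq 3 u v -> braid_eq 4 u v.
Proof.
elim.
- by move=> w; apply: be_refl.
- by move=> a b _ IH; apply: be_sym.
- by move=> a b c _ IH1 _ IH2; apply: be_trans IH2.
move=> u' x y v' Hu Hv Hr; apply: be_ctx; [exact: valid34|exact: valid34|exact: rel34].
Qed.

Lemma cancel_at n u v i b : 0 < i -> i < n -> valid_word n u -> valid_word n v ->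
  braid_eq n (u ++ (i,b) :: (i,~~b) :: v) (u ++ v).
Proof. by move=> i0 i1 Hu Hv; have := be_ctx Hu Hv (br_cancel b i0 i1). Qed.

Lemma T_rel : braid_eq 4 [:: (2,false);(3,false);(2,false)] [:: (3,false);(2,false);(3,false)].
Proof.
set X := [:: (2,false);(3,false);(2,false)].
apply: be_trans (_ : braid_eq 4 _ (X ++ [:: (3,true);(2,true);(3,true)] ++ [:: (3,false);(2,false);(3,false)])) _.
  apply: be_sym; have := congR (@cancel_r 4 [:: (3,true);(2,true);(3,true)] isT) (isT : valid_word 4 X).
  by rewrite cats0.
apply: be_trans (_ : braid_eq 4 _ (X ++ [:: (2,true);(3,true);(2,true)] ++ [:: (3,false);(2,false);(3,false)])) _.
  apply: cong => //; apply: be_sym; apply: rel1; exact: br_near.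
rewrite catA.
have := congL (@cancel_l 4 [:: (2,true);(3,true);(2,true)] isT) (isT : valid_word 4 [:: (3,false);(2,false);(3,false)]).
by apply.
Qed.

Lemma Y_rel : braid_eq 4 [:: (2,true);(3,true);(2,false);(3,false);(2,false);(3,true)] [::].
Proof.
apply: be_trans (_ : braid_eq 4 _ ([:: (2,true);(3,true)] ++ [:: (3,false);(2,false);(3,false)] ++ [:: (3,true)])) _.
  by apply: (@cong 4 _ _ [:: (2,true);(3,true)] [:: (3,true)] T_rel).
apply: be_trans (_ : braid_eq 4 _ ([:: (2,true)] ++ [:: (2,false);(3,false);(3,true)])) _.
  by apply: (@cancel_at 4 [:: (2,true)] [:: (2,false);(3,false);(3,true)] 3 true).
apply: be_trans (_ : braid_eq 4 _ ([::] ++ [:: (3,false);(3,true)])) _.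
  by apply: (@cancel_at 4 [::] [:: (3,false);(3,true)] 2 true).
by apply: (@cancel_at 4 [::] [::] 3 false).
Qed.

Lemma M_rel n : 2 < n -> braid_eq n [:: (1,false);(2,false);(1,true);(1,false);(2,true);(1,true)] [::].
Proof.
move=> n2; have n1 : 1 < n := ltn_trans (isT : 1 < 2) n2.
apply: be_trans (_ : braid_eq n _ ([:: (1,false);(2,false)] ++ [:: (2,true);(1,true)])) _.
  by apply: (@cancel_at n [:: (1,false);(2,false)] [:: (2,true);(1,true)] 1 true); rewrite //= ?n1 ?n2.
apply: be_trans (_ : braid_eq n _ ([:: (1,false)] ++ [:: (1,true)])) _.
  by apply: (@cancel_at n [:: (1,false)] [:: (1,true)] 2 false); rewrite //= ?n1 ?n2.
by apply: (@cancel_at n [::] [::] 1 false).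
Qed.

Lemma VW_rel : braid_eq 4 ([:: (1,false);(2,false);(1,true);(2,true);(3,true);(2,false)] ++
   [:: (3,false);(2,false);(3,true);(1,false);(2,true);(1,true)]) [::].
Proof.
apply: be_trans (_ : braid_eq 4 _ ([:: (1,false);(2,false);(1,true)] ++ [::] ++ [:: (1,false);(2,true);(1,true)])) _.
  by apply: (@cong 4 _ _ [:: (1,false);(2,false);(1,true)] [:: (1,false);(2,true);(1,true)] Y_rel).
exact: M_rel.
Qed.

Lemma decomp w : has (fun l : letter => l.1 == 3) w -> all (fun l : letter => (l.1 == 3) ==> l.2) w ->
  exists a c, w = a ++ (3,true) :: c /\ ~~ has (fun l : letter => l.1 == 3) c.
Proof.
elim/last_ind: w => [|w [k e] IH] //.
rewrite has_rcons all_rcons /= => Hh /andP [He Hw].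
have [Ek|nk] := eqVneq k 3.
  subst k; case: e He => // _.
  by exists w, [::]; rewrite cats1.
rewrite /= (negbTE nk) /= in Hh.
have [a [c [-> Hc]]] := IH Hh Hw.
exists a, (rcons c (k,e)); split; first by rewrite rcons_cat.
by rewrite has_rcons /= (negbTE nk).
Qed.

Lemma h_winv c : h_word (winv c) = winv (h_word c).
Proof.
rewrite /h_word /winv map_rev -!map_comp; congr rev; apply: eq_map => l.
by rewrite /h_letter /=; case: ifP.
Qed.

Lemma nothree u : valid_word 4 u -> ~~ has (fun l : letter => l.1 == 3) u ->
  all (fun l : letter => l.1 <= 3) u && all (fun l : letter => (l.1 == 3) ==> l.2) u.
Proof.
move=> Hv Hh; apply/andP; split.
  by apply: sub_all Hv => l /andP [_].
rewrite -all_predC in Hh; apply: sub_all Hh => l /= /negbTE -> //.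
Qed.

Lemma has_winv (P : pred nat) u : has (fun l : letter => P l.1) (winv u) = has (fun l : letter => P l.1) u.
Proof. by rewrite /winv has_rev has_map. Qed.

Lemma pos_le3 z j : valid_word 4 z -> i_positive j z -> all (fun l : letter => (l.1 == 3) ==> l.2) z.
Proof.
move=> Hv /andP [/andP [Hle Hhas] Hp].
have j3 : j <= 3.
  by case/hasP: Hhas => l Hl /eqP <-; have := allP Hv l Hl; case/andP.
case: (ltngtP j 3) j3 => // [Hj|Ej] _; last by rewrite -Ej.
apply/allP => l Hl; have := allP Hle l Hl => Hlj.
by rewrite (ltn_eqF (leq_ltn_trans Hlj Hj)).
Qed.

Theorem proposition3p7 : densely_ordered 4 ker_h.
Proof.
case=> p [Hv Hk [w' [i [Hw' [Epw [i0 Hip]]]]] Hmin].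
have Hip' := Hip; case/andP: Hip' => /andP [Hle Hhas] Hpos.
have i3 : i <= 3.
  by case/hasP: Hhas => l Hl /eqP <-; have := allP Hw' l Hl; case/andP.
have Ei : i = 3.
  case: (ltngtP i 3) i3 => // Hi _; exfalso.
  have Hw3 : h_word w' = w'.
    rewrite /h_word -[RHS]map_id; apply/eq_in_map => l Hl.
    have := allP Hle l Hl => Hli.
    by rewrite /h_letter (ltn_eqF (leq_ltn_trans Hli Hi)).
  have E3 : braid_eq 3 w' [::].
    by rewrite -Hw3; apply: be_trans Hk; apply: be_sym; exact: h_eq.
  exact: (propA i0 Hw' Hip (mono E3)).
subst i.
have [a [c [Ew Hc]]] := decomp Hhas Hpos.
move: Hw'; rewrite Ew valid_cat /= => /andP [Va Vc].
set W := [:: (3,false);(2,false);(3,true);(1,false);(2,true);(1,true)].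
set V := [:: (1,false);(2,false);(1,true);(2,true);(3,true);(2,false)].
set w := winv c ++ W ++ c.
set v := winv c ++ V ++ c.
have Vw : valid_word 4 w by rewrite !valid_cat valid_winv Vc.
have Vv : valid_word 4 v by rewrite !valid_cat valid_winv Vc.
have K : braid_eq 4 (v ++ w) [::].
  have -> : v ++ w = (winv c ++ V) ++ (c ++ winv c) ++ (W ++ c) by rewrite /v /w !catA.
  apply: be_trans (_ : braid_eq 4 _ ((winv c ++ V) ++ [::] ++ (W ++ c))) _.
    by apply: cong; [exact: cancel_r| rewrite valid_cat valid_winv Vc | rewrite valid_cat Vc].
  have -> : (winv c ++ V) ++ [::] ++ (W ++ c) = winv c ++ (V ++ W) ++ c by rewrite cat0s -!catA.
  apply: be_trans (_ : braid_eq 4 _ (winv c ++ [::] ++ c)) _.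
    by apply: cong; [exact: VW_rel| rewrite valid_winv|].
  exact: cancel_l.
have Nc := nothree Vc Hc.
have Nc' : all (fun l : letter => l.1 <= 3) (winv c) && all (fun l : letter => (l.1 == 3) ==> l.2) (winv c).
  apply: nothree; first by rewrite valid_winv.
  by rewrite (has_winv (fun k => k == 3)).
have Pv : i_positive 3 v.
  case/andP: Nc => Nc1 Nc2; case/andP: Nc' => Nc1' Nc2'.
  by rewrite /i_positive /v !all_cat !has_cat Nc1 Nc2 Nc1' Nc2' /= !orbT.
clearbody v.
have PL : forall z, braid_eq 4 w z ->
    (z = [::] \/ exists j, [/\ 0 < j, valid_word 4 z & i_positive j z]) -> False.
  move=> z Ez Hz.
  have E : braid_eq 4 (v ++ z) [::] := be_trans (be_sym (congR Ez Vv)) K.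
  case: Hz => [Ez0|[j [j0 Vz Pz]]].
    by subst z; rewrite cats0 in E; exact: (propA (isT : 0 < 3) Vv Pv E).
  apply: (propA (isT : 0 < 3) _ _ E); first by rewrite valid_cat Vv.
  case/andP: Pv => /andP [Pv1 Pv2] Pv3.
  rewrite /i_positive !all_cat has_cat Pv1 Pv2 Pv3 (pos_le3 Vz Pz) /=.
  by rewrite !andbT; apply: sub_all Vz => l /andP [_].
have Hq := Hmin (p ++ w).
case: Hq.
- by rewrite valid_cat Hv.
- rewrite /ker_h h_cat.
  apply: be_trans (congL Hk (h_valid Vw)) _.
  rewrite /= /w !h_cat h_winv.
  apply: be_trans (_ : braid_eq 3 _ (winv (h_word c) ++ [::] ++ h_word c)) _.
    apply: cong; [exact: M_rel| |]; rewrite ?valid_winv; exact: h_valid.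
  apply: cancel_l; exact: h_valid.
- exists (a ++ [:: (2,false);(3,true);(1,false);(2,true);(1,true)] ++ c), 3.
  split; first by rewrite !valid_cat Va Vc.
  split; last split=> //.
    apply: be_trans (congL Epw Vw) _.
    rewrite Ew /w -catA /=.
    have -> : (3, true) :: c ++ winv c ++ W ++ c = [:: (3,true)] ++ (c ++ winv c) ++ (W ++ c) by rewrite /= !catA.
    apply: be_trans (_ : braid_eq 4 _ (a ++ [:: (3,true)] ++ [::] ++ W ++ c)) _.
      apply: congR => //; apply: cong => //; first exact: cancel_r.
    rewrite /= /W.
    by apply: (@cancel_at 4 a (_ :: _ :: _ :: _ :: _ :: c) 3 true) => //; rewrite /= Vc.
  case/andP: Nc => Nc1 Nc2.
  have Pa1 : all (fun l : letter => l.1 <= 3) a by move: Hle; rewrite Ew all_cat => /andP [].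
  have Pa2 : all (fun l : letter => (l.1 == 3) ==> l.2) a by move: Hpos; rewrite Ew all_cat => /andP [].
  by rewrite /i_positive !all_cat !has_cat Pa1 Pa2 Nc1 Nc2 /= !orbT.
- move=> E; apply: (PL [::]); last by left.
  have E1 := congR E (_ : valid_word 4 (winv p)).
  apply: be_trans (_ : braid_eq 4 _ ((winv p ++ p) ++ w)) _.
    by apply: be_sym; have := congL (cancel_l Hv) Vw.
  rewrite -catA; apply: be_trans (be_sym (E1 _)) _; first by rewrite valid_winv.
  exact: cancel_l.
- case=> z [j [Vz [Ez [j0 Pz]]]].
  apply: (PL z); last by right; exists j.
  apply: be_trans Ez; rewrite catA.
  by apply: be_sym; have := congL (cancel_l Hv) Vw.
Qed.
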